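(* Let $g=(g_1,\dots,g_m)$ be real polynomials in $x\in\mathbb R^n$ with $V_{\mathbb R}(g)\neq\emptyset$, and let $d\ge1$. (i) If $V_{\mathbb R}(g)$ is compact, then for $f\in\mathbb R[x]_{\le d}$: $\delta_g(f)>0\iff f\in\operatorname{int}P_d(g)$, and $\delta_g(f)=0\iff f\in\partial P_d(g)$. (ii) If $V^h_{\mathbb R}(g)$ is closed at $\infty$, then for $f\in\mathbb R[x]_{\le d}$: $\delta^h_g(f)>0\iff f\in\operatorname{int}P_d(g)$, and $\delta^h_g(f)=0\iff f\in\partial P_d(g)$.
   Context: $\mathbb R[x]_{\le d}$ is the finite-dimensional space of real polynomials in $x=(x_1,\dots,x_n)$ of degree at most $d$; interior and boundary are taken there in the Euclidean topology. $V_{\mathbb R}(g)=\{x\in\mathbb R^n:g_1(x)=\dots=g_m(x)=0\}$ and $P_d(g)=\{f\in\mathbb R[x]_{\le d}: f(x)\ge0\ \forall x\in V_{\mathbb R}(g)\}$. With $\tilde x=(x_0,x_1,\dots,x_n)$: for $f\in\mathbb R[x]_{\le d}$, $f^h(\tilde x)=x_0^df(x/x_0)$; for each $g_i$ of degree $d_i$, $g_i^h(\tilde x)=x_0^{d_i}g_i(x/x_0)$. $V^h_{\mathbb R}(g)=\{\tilde x\in\mathbb R^{n+1}:g_1^h(\tilde x)=\dots=g_m^h(\tilde x)=0\}$; it is closed at $\infty$ if $V^h_{\mathbb R}(g)\cap\{x_0\ge0\}$ equals the Euclidean closure of $V^h_{\mathbb R}(g)\cap\{x_0>0\}$. Define $\delta_g(f)=\min_{x\in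 V_{\mathbb R}(g)}f(x)$ and $\delta^h_g(f)=\min\{f^h(\tilde x):\tilde x\in V^h_{\mathbb R}(g),\ \|\tilde x\|_2=1,\ x_0\ge0\}$. *)

(* Defs.v *)
From Stdlib Require Import Reals List Arith.
Import ListNotations.
Open Scope R_scope.

Definition midx := list nat.

Fixpoint midxs (n D : nat) : list midx :=
  match n with
  | O => [ [] ]
  | S n' => flat_map (fun k => map (cons k) (midxs n' (D - k))) (seq 0 (S D))
  end.

Definition mdeg (a : midx) : nat := list_sum a.

(* A point of R^n is a function nat -> R vanishing at all indices >= n. *)
Definition inRn (n : nat) (x : nat -> R) : Prop := forall i, (n <= i)%nat -> x i = 0.

Fixpoint monoval (a : midx) (x : nat -> R) : R :=
  match a with
  | [] => 1
  | k :: a' => x O ^ k * monoval a' (fun i => x (S i))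
  end.

Definition mpoly := midx -> R.

(* p lies in R[x_1..x_n]_{<= D}: its coefficients are supported on the
   multi-indices of length n and total degree <= D. *)
Definition supp (n D : nat) (p : mpoly) : Prop :=
  forall a, p a <> 0 -> In a (midxs n D).

Definition sumR (l : list R) : R := fold_right Rplus 0 l.

Definition peval (n D : nat) (p : mpoly) (x : nat -> R) : R :=
  sumR (map (fun a => p a * monoval a x) (midxs n D)).

(* the (true) degree of p (0 for the zero polynomial) *)
Definition pdeg (n D : nat) (p : mpoly) : nat :=
  fold_right Nat.max O
    (map (fun a => if Req_EM_T (p a) 0 then O else mdeg a) (midxs n D)).

(* homogenization w.r.t. degree e: p^h(x0,x) = x0^e p(x/x0)
   = sum_a p_a x0^(e - |a|) x^a *)
Definition phom (n D e : nat) (p : mpoly) (x0 : R) (x : nat -> R) : R :=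
  sumR (map (fun a => p a * x0 ^ (e - mdeg a) * monoval a x) (midxs n D)).

Definition VR (n Dg : nat) (g : list mpoly) (x : nat -> R) : Prop :=
  inRn n x /\ Forall (fun gi => peval n Dg gi x = 0) g.

(* V^h_R(g) in R^{n+1}; a point is (x0, x); g_i^h uses d_i = deg g_i *)
Definition VRh (n Dg : nat) (g : list mpoly) (p : R * (nat -> R)) : Prop :=
  inRn n (snd p) /\
  Forall (fun gi => phom n Dg (pdeg n Dg gi) gi (fst p) (snd p) = 0) g.

Definition Pd (n d Dg : nat) (g : list mpoly) (f : mpoly) : Prop :=
  supp n d f /\ forall x, VR n Dg g x -> 0 <= peval n d f x.

(* Euclidean topology on R[x]_{<=d}: via the (l1) norm on coefficients *)
Definition cdist (n d : nat) (f h : mpoly) : R :=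
  sumR (map (fun a => Rabs (f a - h a)) (midxs n d)).

Definition interiorP (n d : nat) (S : mpoly -> Prop) (f : mpoly) : Prop :=
  supp n d f /\
  exists eps, 0 < eps /\
    forall h, supp n d h -> cdist n d f h < eps -> S h.

Definition closureP (n d : nat) (S : mpoly -> Prop) (f : mpoly) : Prop :=
  supp n d f /\
  forall eps, 0 < eps -> exists h, supp n d h /\ S h /\ cdist n d f h < eps.

Definition boundaryP (n d : nat) (S : mpoly -> Prop) (f : mpoly) : Prop :=
  closureP n d S f /\ ~ interiorP n d S f.

Definition near_n (n : nat) (eps : R) (x y : nat -> R) : Prop :=
  forall i, (i < n)%nat -> Rabs (x i - y i) < eps.

Definition open_n (n : nat) (U : (nat -> R) -> Prop) : Prop :=
  forall x, inRn n x -> U x ->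
    exists eps, 0 < eps /\ forall y, inRn n y -> near_n n eps x y -> U y.

Definition compact_n (n : nat) (K : (nat -> R) -> Prop) : Prop :=
  (forall x, K x -> inRn n x) /\
  forall (I : Type) (U : I -> (nat -> R) -> Prop),
    (forall i, open_n n (U i)) ->
    (forall x, K x -> exists i, U i x) ->
    exists l : list I, forall x, K x -> exists i, In i l /\ U i x.

Definition closure_h (n : nat) (S : R * (nat -> R) -> Prop) (p : R * (nat -> R)) : Prop :=
  inRn n (snd p) /\
  forall eps, 0 < eps -> exists q, S q /\ Rabs (fst p - fst q) < eps /\
                                  near_n n eps (snd p) (snd q).

Definition closed_at_inf (n Dg : nat) (g : list mpoly) : Prop :=
  forall p, (VRh n Dg g p /\ 0 <= fst p) <->
            closure_h n (fun q => VRh n Dg g q /\ 0 < fst q) p.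

Definition is_min {T : Type} (S : T -> Prop) (phi : T -> R) (v : R) : Prop :=
  (exists x, S x /\ phi x = v) /\ forall x, S x -> v <= phi x.

Definition sqnorm_h (n : nat) (p : R * (nat -> R)) : R :=
  fst p ^ 2 + sumR (map (fun i => snd p i ^ 2) (seq 0 n)).

(* the feasible set of delta^h_g *)
Definition Sh (n Dg : nat) (g : list mpoly) (p : R * (nat -> R)) : Prop :=
  VRh n Dg g p /\ sqnorm_h n p = 1 /\ 0 <= fst p.

(* Main.v *)
Require Import Defs.
From Stdlib Require Import Reals List Arith Lra Lia ClassicalEpsilon Classical FunctionalExtensionality.
Import ListNotations.
Open Scope R_scope.


Lemma sumR_map_plus {A} (F G : A -> R) l :
  sumR (map (fun a => F a + G a) l) = sumR (map F l) + sumR (map G l).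
Proof. induction l; simpl; [lra|]. rewrite IHl; lra. Qed.

Lemma sumR_map_scal {A} (c : R) (F : A -> R) l :
  sumR (map (fun a => c * F a) l) = c * sumR (map F l).
Proof. induction l; simpl; [lra|]. rewrite IHl; lra. Qed.

Lemma sumR_map_ext {A} (F G : A -> R) l :
  (forall a, In a l -> F a = G a) -> sumR (map F l) = sumR (map G l).
Proof. induction l; simpl; intros H; [lra|]. rewrite H, IHl; auto. Qed.

Lemma sumR_map_le {A} (F G : A -> R) l :
  (forall a, In a l -> F a <= G a) -> sumR (map F l) <= sumR (map G l).
Proof. induction l; simpl; intros H; [lra|].
  assert (F a <= G a) by auto. assert (sumR (map F l) <= sumR (map G l)) by auto. lra. Qed.

Lemma sumR_map_abs {A} (F : A -> R) l :
  Rabs (sumR (map F l)) <= sumR (map (fun a => Rabs (F a)) l).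
Proof. induction l; simpl. rewrite Rabs_R0; lra.
  eapply Rle_trans. apply Rabs_triang. lra. Qed.

Lemma sumR_map_nonneg {A} (F : A -> R) l :
  (forall a, In a l -> 0 <= F a) -> 0 <= sumR (map F l).
Proof. induction l; simpl; intros H; [lra|].
  assert (0 <= F a) by auto. assert (0 <= sumR (map F l)) by auto. lra. Qed.

Lemma sumR_map_elem {A} (F : A -> R) l a :
  (forall a, In a l -> 0 <= F a) -> In a l -> F a <= sumR (map F l).
Proof. induction l; simpl; intros H Hi; [tauto|].
  destruct Hi as [<-|Hi].
  - assert (0 <= sumR (map F l)) by (apply sumR_map_nonneg; auto). lra.
  - assert (0 <= F a0) by auto. assert (F a <= sumR (map F l)) by auto. lra. Qed.

Lemma sumR_map_zero {A} (F : A -> R) l :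
  (forall a, In a l -> F a = 0) -> sumR (map F l) = 0.
Proof. induction l; simpl; intros H; [lra|]. rewrite H, IHl; auto; lra. Qed.

Definition meq := list_eq_dec Nat.eq_dec.

Lemma sum_pert (L : list midx) a (u w : midx -> R) :
  NoDup L -> In a L ->
  sumR (map (fun b => if meq b a then u b else w b) L) = sumR (map w L) + (u a - w a).
Proof.
  induction L as [|b L IH]; simpl; intros Hn Hi; [tauto|].
  inversion Hn; subst. destruct (meq b a) as [->|Hne].
  - rewrite (sumR_map_ext _ w). lra. intros c Hc. destruct (meq c a); auto. subst; tauto.
  - destruct Hi as [->|Hi]; [tauto|]. rewrite IH; auto. lra.
Qed.

Lemma midxs_S n D : midxs (S n) D = flat_map (fun k => map (cons k) (midxs n (D - k))) (seq 0 (S D)).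
Proof. reflexivity. Qed.
Lemma midxs_inv n D a : In a (midxs n D) -> length a = n /\ (mdeg a <= D)%nat.
Proof.
  revert D a; induction n; intros D a H.
  - destruct H as [<-|[]]. simpl. unfold mdeg; simpl. lia.
  - rewrite midxs_S in H. apply in_flat_map in H. destruct H as [k [Hk H]]. apply in_seq in Hk.
    apply in_map_iff in H. destruct H as [b [<- Hb]]. apply IHn in Hb.
    unfold mdeg in *; simpl. lia.
Qed.

Lemma midxs_in n D a : length a = n -> (mdeg a <= D)%nat -> In a (midxs n D).
Proof.
  revert D a; induction n; intros D a Hl Hd.
  - destruct a; [simpl; auto|discriminate].
  - destruct a as [|k b]; [discriminate|]. simpl in Hl. unfold mdeg in Hd; simpl in Hd.
    rewrite midxs_S. apply in_flat_map. exists k. split. apply in_seq. lia.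
    apply in_map. apply IHn. lia. unfold mdeg. lia.
Qed.

Lemma NoDup_flat_map' {A B} (f : A -> list B) l :
  NoDup l -> (forall x, NoDup (f x)) ->
  (forall x y z, x <> y -> In z (f x) -> In z (f y) -> False) ->
  NoDup (flat_map f l).
Proof.
  induction l; simpl; intros Hn Hf Hd. constructor.
  inversion Hn; subst. apply NoDup_app; auto.
  intros z Hz Hz2. apply in_flat_map in Hz2. destruct Hz2 as [y [Hy Hz2]].
  apply (Hd a y z); auto. intros ->; tauto.
Qed.

Lemma midxs_nodup n D : NoDup (midxs n D).
Proof.
  revert D; induction n; intros D.
  - constructor; [simpl; tauto| constructor].
  - rewrite midxs_S. apply NoDup_flat_map'. apply seq_NoDup.
    + intros k. apply NoDup_map_NoDup_ForallPairs; auto.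
      intros x y _ _ H; injection H; auto.
    + intros x y z Hxy H1 H2. apply in_map_iff in H1, H2.
      destruct H1 as [u [<- _]]. destruct H2 as [w [Hw _]]. injection Hw; intros; subst; auto.
Qed.

Definition cont_n (k : nat) (F : (nat -> R) -> R) : Prop :=
  forall x eps, 0 < eps -> exists del, 0 < del /\
    forall y, near_n k del x y -> Rabs (F x - F y) < eps.

Lemma near_mono k d d' x y : near_n k d x y -> d <= d' -> near_n k d' x y.
Proof. intros H Hd i Hi. specialize (H i Hi). lra. Qed.

Lemma near_min k d1 d2 x y : near_n k (Rmin d1 d2) x y -> near_n k d1 x y /\ near_n k d2 x y.
Proof. intros H; split; eapply near_mono; eauto; [apply Rmin_l|apply Rmin_r]. Qed.

Lemma cont_const k c : cont_n k (fun _ => c).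
Proof. intros x eps He. exists 1. split; [lra|]. intros. replace (c - c) with 0 by ring. rewrite Rabs_R0; auto. Qed.

Lemma cont_coord k i : (i < k)%nat -> cont_n k (fun x => x i).
Proof. intros Hi x eps He. exists eps; split; [auto|]. intros y H. apply H; auto. Qed.

Lemma cont_plus k F G : cont_n k F -> cont_n k G -> cont_n k (fun x => F x + G x).
Proof.
  intros HF HG x eps He.
  destruct (HF x (eps/2)) as [d1 [Hd1 H1]]; [lra|].
  destruct (HG x (eps/2)) as [d2 [Hd2 H2]]; [lra|].
  exists (Rmin d1 d2). split. apply Rmin_glb_lt; auto.
  intros y Hy. apply near_min in Hy. destruct Hy as [Hy1 Hy2].
  specialize (H1 y Hy1). specialize (H2 y Hy2).
  replace (F x + G x - (F y + G y)) with ((F x - F y) + (G x - G y)) by ring.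
  eapply Rle_lt_trans. apply Rabs_triang. lra.
Qed.

Lemma cont_opp k F : cont_n k F -> cont_n k (fun x => - F x).
Proof. intros HF x eps He. destruct (HF x eps He) as [d [Hd H]]. exists d; split; auto.
  intros y Hy. replace (- F x - - F y) with (- (F x - F y)) by ring. rewrite Rabs_Ropp; auto. Qed.

Lemma cont_abs k F : cont_n k F -> cont_n k (fun x => Rabs (F x)).
Proof. intros HF x eps He. destruct (HF x eps He) as [d [Hd H]]. exists d; split; auto.
  intros y Hy. eapply Rle_lt_trans; [|apply (H y Hy)]. apply Rabs_triang_inv2. Qed.

Lemma cont_mult k F G : cont_n k F -> cont_n k G -> cont_n k (fun x => F x * G x).
Proof.
  intros HF HG x eps He.
  set (a := Rabs (F x)). set (b := Rabs (G x)).
  assert (Ha : 0 <= a) by apply Rabs_pos. assert (Hb : 0 <= b) by apply Rabs_pos.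
  destruct (HF x (eps / (2 * (b + 1)))) as [d1 [Hd1 H1]].
  { apply Rdiv_lt_0_compat; lra. }
  destruct (HG x (Rmin 1 (eps / (2 * (a + 1))))) as [d2 [Hd2 H2]].
  { apply Rmin_glb_lt; [lra|]. apply Rdiv_lt_0_compat; lra. }
  exists (Rmin d1 d2). split. apply Rmin_glb_lt; auto.
  intros y Hy. apply near_min in Hy. destruct Hy as [Hy1 Hy2].
  specialize (H1 y Hy1). specialize (H2 y Hy2).
  assert (H2a : Rabs (G x - G y) < 1) by (eapply Rlt_le_trans; [apply H2|apply Rmin_l]).
  assert (H2b : Rabs (G x - G y) < eps / (2 * (a + 1))) by (eapply Rlt_le_trans; [apply H2|apply Rmin_r]).
  assert (HGy : Rabs (G y) <= b + 1).
  { unfold b. replace (G y) with (G x - (G x - G y)) by ring.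
    eapply Rle_trans. apply Rabs_triang. rewrite Rabs_Ropp. lra. }
  replace (F x * G x - F y * G y) with (F x * (G x - G y) + G y * (F x - F y)) by ring.
  eapply Rle_lt_trans. apply Rabs_triang. rewrite !Rabs_mult.
  assert (E1 : a * Rabs (G x - G y) <= a * (eps / (2 * (a + 1)))).
  { apply Rmult_le_compat_l; lra. }
  assert (E2 : Rabs (G y) * Rabs (F x - F y) <= (b+1) * (eps / (2 * (b + 1)))).
  { apply Rmult_le_compat; try apply Rabs_pos; lra. }
  assert (E3 : a * (eps / (2 * (a + 1))) < eps / 2).
  { unfold Rdiv. rewrite Rinv_mult.
    replace (a * (eps * (/ 2 * / (a + 1)))) with ((eps/2) * (a / (a+1))) by (field; lra).
    assert (a / (a+1) < 1). { apply (Rmult_lt_reg_r (a+1)); [lra|]. unfold Rdiv. rewrite Rmult_assoc, Rinv_l; lra. }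
    assert (0 < eps/2) by lra. nra. }
  assert (E4 : (b+1) * (eps / (2 * (b + 1))) = eps / 2) by (field; lra).
  fold a in E1 |- *. lra.
Qed.

Lemma cont_pow k F m : cont_n k F -> cont_n k (fun x => F x ^ m).
Proof. intros HF; induction m; simpl. apply cont_const. apply cont_mult; auto. Qed.

Lemma cont_sum {A} k (G : A -> (nat -> R) -> R) l :
  (forall a, In a l -> cont_n k (G a)) -> cont_n k (fun x => sumR (map (fun a => G a x) l)).
Proof. induction l; simpl; intros H. apply cont_const. apply cont_plus; auto. Qed.

Lemma cont_ext k F G : (forall x, F x = G x) -> cont_n k F -> cont_n k G.
Proof. intros E H x eps He. destruct (H x eps He) as [d [Hd H']]. exists d; split; auto.
  intros y Hy. rewrite <- !E; auto. Qed.

Definition shift (x : nat -> R) : nat -> R := fun i => x (S i).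

Lemma cont_shift k F : cont_n k F -> cont_n (S k) (fun x => F (shift x)).
Proof. intros H x eps He. destruct (H (shift x) eps He) as [d [Hd H']]. exists d; split; auto.
  intros y Hy. apply H'. intros i Hi. apply (Hy (S i)). lia. Qed.

Lemma cont_weaken k k' F : (k <= k')%nat -> cont_n k F -> cont_n k' F.
Proof. intros Hk H x eps He. destruct (H x eps He) as [d [Hd H']]. exists d; split; auto.
  intros y Hy. apply H'. intros i Hi. apply Hy. lia. Qed.

Lemma cont_monoval a k : (length a <= k)%nat -> cont_n k (monoval a).
Proof.
  revert k; induction a as [|c a IH]; intros k Hk; simpl.
  - apply cont_const.
  - destruct k as [|k]; simpl in Hk; [lia|].
    apply cont_mult. apply cont_pow, cont_coord; lia.
    apply (cont_shift k (monoval a)). apply IH. lia.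
Qed.

Lemma cont_peval n D p : cont_n n (peval n D p).
Proof.
  unfold peval. apply (cont_sum n (fun a x => p a * monoval a x)).
  intros a Ha. apply cont_mult. apply cont_const. apply cont_monoval.
  apply midxs_inv in Ha. lia.
Qed.

Definition CoverProp (k : nat) (K : (nat -> R) -> Prop) : Prop :=
  forall G : (nat -> R) -> R -> Prop,
    (forall y, K y -> exists d, 0 < d /\ G y d) ->
    exists l : list ((nat -> R) * R), forall x, K x ->
      exists p, In p l /\ G (fst p) (snd p) /\ near_n k (snd p) (fst p) x.

Lemma list_lb {A} (l : list A) (h : A -> R) : exists B, forall p, In p l -> B <= h p.
Proof. induction l as [|a l [B HB]]; simpl. exists 0; tauto.
  exists (Rmin (h a) B). intros p [<-|Hp]. apply Rmin_l. eapply Rle_trans. apply Rmin_r. auto. Qed.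

Lemma list_pos {A} (l : list A) (h : A -> R) (P : A -> Prop) :
  (forall p, In p l -> P p -> 0 < h p) -> exists e, 0 < e /\ forall p, In p l -> P p -> e <= h p.
Proof. induction l as [|a l IH]; simpl; intros H. exists 1; split; [lra|tauto].
  destruct IH as [e [He H']]. intros; auto.
  destruct (classic (P a)) as [Pa|nPa].
  - exists (Rmin (h a) e). split. apply Rmin_glb_lt; auto.
    intros p [<-|Hp] Pp. apply Rmin_l. eapply Rle_trans. apply Rmin_r. auto.
  - exists e. split; auto. intros p [<-|Hp] Pp; [tauto|auto].
Qed.

Lemma min_exists k K F : CoverProp k K -> (exists x, K x) -> cont_n k F ->
  exists v, is_min K F v.
Proof.
  intros HC [x0 Hx0] HF.
  destruct (HC (fun y d => K y /\ forall z, near_n k d y z -> F y - 1 < F z)) as [l Hl].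
  { intros y Ky. destruct (HF y 1) as [d [Hd H]]; [lra|]. exists d; split; auto. split; auto.
    intros z Hz. specialize (H z Hz). apply Rabs_def2 in H. lra. }
  destruct (list_lb l (fun p => F (fst p) - 1)) as [B HB].
  assert (Hlow : forall z, K z -> B < F z).
  { intros z Kz. destruct (Hl z Kz) as [p [Hp [[_ Hg] Hn]]]. specialize (Hg z Hn). specialize (HB p Hp). simpl in HB. lra. }
  set (E := fun r => exists z, K z /\ r = - F z).
  destruct (completeness E) as [M [HM1 HM2]].
  { exists (-B). intros r [z [Kz ->]]. specialize (Hlow z Kz). lra. }
  { exists (- F x0). exists x0; auto. }
  assert (Hge : forall z, K z -> - M <= F z).
  { intros z Kz. assert (- F z <= M) by (apply HM1; exists z; auto). lra. }
  exists (- M). split; [|auto].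
  apply NNPP. intros Hno.
  assert (Hgt : forall z, K z -> - M < F z).
  { intros z Kz. destruct (Rle_lt_or_eq_dec _ _ (Hge z Kz)) as [H|H]; auto. exfalso. apply Hno. exists z; auto. }
  destruct (HC (fun y d => K y /\ forall z, near_n k d y z -> - M + (F y + M)/2 < F z)) as [l2 Hl2].
  { intros y Ky. destruct (HF y ((F y + M)/2)) as [d [Hd H]]. specialize (Hgt y Ky). lra.
    exists d; split; auto. split; auto. intros z Hz. specialize (H z Hz). apply Rabs_def2 in H. lra. }
  destruct (list_pos l2 (fun p => (F (fst p) + M)/2) (fun p => K (fst p))) as [e [He He2]].
  { intros p _ Kp. specialize (Hgt _ Kp). simpl. lra. }
  assert (HM3 : M <= M - e).
  { apply HM2. intros r [z [Kz ->]]. destruct (Hl2 z Kz) as [p [Hp [[Kp Hg] Hn]]].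
    specialize (Hg z Hn). specialize (He2 p Hp Kp). simpl in He2. lra. }
  lra.
Qed.

Lemma fin_pos k (h : nat -> R) : (forall i, (i < k)%nat -> 0 < h i) ->
  exists e, 0 < e /\ forall i, (i < k)%nat -> e <= h i.
Proof.
  induction k; intros H. exists 1; split; [lra|intros; lia].
  destruct IHk as [e [He H']]. intros; apply H; lia.
  exists (Rmin e (h k)). split. apply Rmin_glb_lt; auto.
  intros i Hi. destruct (Nat.eq_dec i k) as [->|Hne]. apply Rmin_r.
  eapply Rle_trans. apply Rmin_l. apply H'. lia.
Qed.

Lemma near_open k d y z : near_n k d y z -> exists e, 0 < e /\ forall w, near_n k e z w -> near_n k d y w.
Proof.
  intros H. destruct (fin_pos k (fun i => d - Rabs (y i - z i))) as [e [He H']].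
  { intros i Hi. specialize (H i Hi). lra. }
  exists e; split; auto. intros w Hw i Hi. specialize (H' i Hi). specialize (Hw i Hi).
  replace (y i - w i) with ((y i - z i) + (z i - w i)) by ring.
  eapply Rle_lt_trans. apply Rabs_triang. lra.
Qed.

Lemma compact_cover k K : compact_n k K -> CoverProp k K.
Proof.
  intros [_ HK] G HG.
  destruct (HK ((nat -> R) * R)%type
    (fun p z => K (fst p) /\ 0 < snd p /\ G (fst p) (snd p) /\ near_n k (snd p) (fst p) z)) as [l Hl].
  - intros p z _ [Kp [Hp [Gp Hn]]]. destruct (near_open _ _ _ _ Hn) as [e [He He2]].
    exists e; split; auto.
  - intros x Kx. destruct (HG x Kx) as [d [Hd Gd]]. exists (x, d). simpl. repeat split; auto.
    intros i Hi. replace (x i - x i) with 0 by ring. rewrite Rabs_R0; auto.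
  - exists l. intros x Kx. destruct (Hl x Kx) as [p [Hp [_ [_ [Gp Hn]]]]]. exists p; auto.
Qed.

Section Box.
Variable k : nat.
Variable G : (nat -> R) -> R -> Prop.

Definition st := ((nat -> R) * (nat -> R))%type.
Definition inB (s : st) (x : nat -> R) := forall i, (i < k)%nat -> fst s i <= x i <= snd s i.
Definition good (s : st) := exists l : list ((nat -> R) * R), forall x, inRn k x -> inB s x ->
      exists p, In p l /\ G (fst p) (snd p) /\ near_n k (snd p) (fst p) x.
Definition upd (f : nat -> R) i v := fun j => if Nat.eq_dec j i then v else f j.
Definition mid (s : st) i := (fst s i + snd s i) / 2.
Definition bis i (s : st) : st :=
  if excluded_middle_informative (good (fst s, upd (snd s) i (mid s i)))
  then (upd (fst s) i (mid s i), snd s) else (fst s, upd (snd s) i (mid s i)).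

Lemma bis_bad i s : ~ good s -> ~ good (bis i s).
Proof.
  intros Hs. unfold bis. destruct excluded_middle_informative as [[l1 H1]|H]; auto.
  intros [l2 H2]. apply Hs. exists (l1 ++ l2). intros x Hx Hb.
  destruct (Rle_or_lt (x i) (mid s i)) as [Hm|Hm].
  - destruct (H1 x Hx) as [p [Hp Hq]].
    { intros j Hj. simpl. unfold upd. destruct Nat.eq_dec; subst; auto. split; auto. apply Hb; auto. }
    exists p. split; auto. apply in_or_app; auto.
  - destruct (H2 x Hx) as [p [Hp Hq]].
    { intros j Hj. simpl. unfold upd. destruct Nat.eq_dec; subst; auto. split; [lra|]. apply Hb; auto. }
    exists p. split; auto. apply in_or_app; auto.
Qed.

Lemma bis_spec i s :
  (forall j, j <> i -> fst (bis i s) j = fst s j /\ snd (bis i s) j = snd s j) /\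
  ((fst (bis i s) i = mid s i /\ snd (bis i s) i = snd s i) \/
   (fst (bis i s) i = fst s i /\ snd (bis i s) i = mid s i)).
Proof.
  unfold bis, upd. destruct excluded_middle_informative; simpl; split.
  - intros j Hj. destruct Nat.eq_dec; [lia|auto].
  - left. destruct Nat.eq_dec; [auto|lia].
  - intros j Hj. destruct Nat.eq_dec; [lia|auto].
  - right. destruct Nat.eq_dec; [auto|lia].
Qed.

Fixpoint roundN m (s : st) : st := match m with O => s | S m => bis m (roundN m s) end.

Lemma roundN_bad m s : ~ good s -> ~ good (roundN m s).
Proof. induction m; simpl; auto. intros; apply bis_bad; auto. Qed.

Lemma roundN_spec m s i : fst s i <= snd s i ->
  ((i < m)%nat -> snd (roundN m s) i - fst (roundN m s) i = (snd s i - fst s i) / 2 /\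
       fst s i <= fst (roundN m s) i /\ snd (roundN m s) i <= snd s i) /\
  ((m <= i)%nat -> fst (roundN m s) i = fst s i /\ snd (roundN m s) i = snd s i).
Proof.
  intros Hle. induction m; simpl. split; intros; [lia|auto].
  destruct IHm as [IH1 IH2]. destruct (bis_spec m (roundN m s)) as [B1 B2].
  split; intros Hi.
  - destruct (Nat.eq_dec i m) as [->|Hne].
    + destruct (IH2 (le_n m)) as [E1 E2]. unfold mid in B2. rewrite E1, E2 in B2.
      destruct B2 as [[-> ->]|[-> ->]]; repeat split; lra.
    + destruct (B1 i Hne) as [-> ->]. apply IH1. lia.
  - destruct (B1 i ltac:(lia)) as [-> ->]. apply IH2. lia.
Qed.

Definition s0 : st := (fun _ => -1, fun _ => 1).
Definition sq j := Nat.iter j (roundN k) s0.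

Lemma sq_S j : sq (S j) = roundN k (sq j).
Proof. reflexivity. Qed.

Lemma sq_le j i : fst (sq j) i <= snd (sq j) i.
Proof.
  induction j. simpl. lra. rewrite sq_S.
  destruct (roundN_spec k (sq j) i IHj) as [H1 H2].
  destruct (lt_dec i k) as [Hi|Hi].
  - destruct (H1 Hi) as [A [B C]]. lra.
  - destruct H2 as [-> ->]. lia. lra.
Qed.

Lemma sq_step j i : (snd (sq (S j)) i - fst (sq (S j)) i = (snd (sq j) i - fst (sq j) i) / 2 \/
     (snd (sq (S j)) i - fst (sq (S j)) i = (snd (sq j) i - fst (sq j) i)))
   /\ fst (sq j) i <= fst (sq (S j)) i /\ snd (sq (S j)) i <= snd (sq j) i.
Proof.
  rewrite sq_S. destruct (roundN_spec k (sq j) i (sq_le j i)) as [H1 H2].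
  destruct (lt_dec i k) as [Hi|Hi].
  - destruct (H1 Hi) as [A [B C]]. repeat split; lra.
  - destruct H2 as [-> ->]. lia. repeat split; lra.
Qed.

Lemma sq_width j i : (i < k)%nat -> snd (sq j) i - fst (sq j) i = 2 / 2 ^ j.
Proof.
  intros Hi. induction j. simpl. unfold s0; simpl. field.
  rewrite sq_S. destruct (roundN_spec k (sq j) i (sq_le j i)) as [H1 _]. destruct (H1 Hi) as [A _].
  rewrite A, IHj. simpl. field. apply pow_nonzero. lra.
Qed.

Lemma sq_mono j j' i : (j <= j')%nat -> fst (sq j) i <= fst (sq j') i /\ snd (sq j') i <= snd (sq j) i.
Proof.
  induction 1. lra. destruct (sq_step m i) as [_ [A B]]. lra.
Qed.


Lemma sq_le2 j j' i : fst (sq j) i <= snd (sq j') i.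
Proof.
  destruct (sq_mono j (Nat.max j j') i) as [A _]. lia.
  destruct (sq_mono j' (Nat.max j j') i) as [_ B]. lia.
  pose proof (sq_le (Nat.max j j') i). lra.
Qed.

Lemma pow2_gt j : INR j < 2 ^ j.
Proof. induction j. simpl; lra. rewrite S_INR. simpl. assert (1 <= 2 ^ j).
  { clear IHj. induction j; simpl; lra. } lra. Qed.

Lemma box_cover_aux :
  (forall y, inRn k y -> (forall i, (i < k)%nat -> -1 <= y i <= 1) -> exists d, 0 < d /\ G y d) ->
  good s0.
Proof.
  intros HG. apply NNPP. intros Hbad.
  assert (Hb : forall j, ~ good (sq j)).
  { induction j. exact Hbad. rewrite sq_S. apply roundN_bad; auto. }
  assert (Hc : forall i, exists c, (forall j, fst (sq j) i <= c) /\ (forall j, c <= snd (sq j) i)).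
  { intros i. destruct (completeness (fun r => exists j, r = fst (sq j) i)) as [c [C1 C2]].
    - exists (snd (sq O) i). intros r [j ->]. apply sq_le2.
    - exists (fst (sq O) i). exists O; auto.
    - exists c. split. intros j. apply C1. exists j; auto.
      intros j. apply C2. intros r [j' ->]. apply sq_le2. }
  set (c := fun i => if lt_dec i k then proj1_sig (constructive_indefinite_description _ (Hc i)) else 0).
  assert (Hcb : forall i j, (i < k)%nat -> fst (sq j) i <= c i <= snd (sq j) i).
  { intros i j Hi. unfold c. destruct lt_dec; [|lia].
    destruct (constructive_indefinite_description _ (Hc i)) as [ci [A B]]. simpl. auto. }
  destruct (HG c) as [d [Hd Gd]].
  { intros i Hi. unfold c. destruct lt_dec; [lia|auto]. }
  { intros i Hi. specialize (Hcb i O Hi). simpl in Hcb. exact Hcb. }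
  destruct (INR_archimed d 2 Hd) as [j Hj].
  apply (Hb j). exists [(c, d)]. intros x _ Hx. exists (c, d). simpl. split; auto. split; auto.
  intros i Hi. specialize (Hx i Hi). specialize (Hcb i j Hi). pose proof (sq_width j i Hi).
  pose proof (pow2_gt j).
  assert (2 / 2 ^ j < d).
  { assert (0 < 2 ^ j) by (apply pow_lt; lra).
    assert (d * INR j < d * 2^j) by (apply Rmult_lt_compat_l; auto).
    apply (Rmult_lt_reg_r (2 ^ j)). lra. unfold Rdiv. rewrite Rmult_assoc, Rinv_l. lra.
    apply pow_nonzero; lra. }
  apply Rabs_def1; lra.
Qed.

End Box.

Lemma closed_box_cover k K :
  (forall x, K x -> inRn k x /\ forall i, (i < k)%nat -> -1 <= x i <= 1) ->
  (forall y, inRn k y -> ~ K y -> exists d, 0 < d /\ forall z, near_n k d y z -> ~ K z) ->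
  CoverProp k K.
Proof.
  intros Hbox Hcl G HG.
  destruct (box_cover_aux k (fun y d => (K y /\ G y d) \/ (~ K y /\ forall z, near_n k d y z -> ~ K z)))
    as [l Hl].
  { intros y Hy Hy2. destruct (classic (K y)) as [Ky|nKy].
    - destruct (HG y Ky) as [d [Hd Gd]]. exists d; auto.
    - destruct (Hcl y Hy nKy) as [d [Hd H]]. exists d; auto. }
  exists l. intros x Kx. destruct (Hbox x Kx) as [Hx Hx2].
  destruct (Hl x Hx) as [p [Hp [[[_ Gp]|[_ Hn]] Hnear]]].
  - intros i Hi. simpl. apply Hx2; auto.
  - exists p; auto.
  - exfalso. apply (Hn x Hnear Kx).
Qed.

Lemma mdeg_cons c a : mdeg (c :: a) = (c + mdeg a)%nat.
Proof. reflexivity. Qed.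

Lemma monoval_scale a t x : monoval a (fun i => t * x i) = t ^ mdeg a * monoval a x.
Proof.
  revert x; induction a as [|c a IH]; intros x. unfold mdeg; simpl; ring.
  cbn [monoval]. rewrite (IH (fun i => x (S i))). rewrite mdeg_cons, pow_add, Rpow_mult_distr. ring.
Qed.

Lemma pow_abs_le1 r m : Rabs r <= 1 -> Rabs (r ^ m) <= 1.
Proof. intros H. rewrite <- RPow_abs. induction m; simpl. lra.
  assert (0 <= Rabs r) by apply Rabs_pos. assert (0 <= Rabs r ^ m) by (apply pow_le; auto). nra. Qed.

Lemma monoval_le1 a x : (forall i, Rabs (x i) <= 1) -> Rabs (monoval a x) <= 1.
Proof.
  revert x; induction a as [|c a IH]; intros x H; simpl. rewrite Rabs_R1; lra.
  rewrite Rabs_mult. assert (A := pow_abs_le1 (x O) c (H O)).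
  assert (B := IH (fun i => x (S i)) (fun i => H (S i))).
  assert (0 <= Rabs (x O ^ c)) by apply Rabs_pos. assert (0 <= Rabs (monoval a (fun i => x (S i)))) by apply Rabs_pos.
  nra.
Qed.

Lemma monoval_zeros m x : monoval (repeat 0%nat m) x = 1.
Proof. revert x; induction m; intros x; simpl; auto. rewrite IHm. ring. Qed.

Lemma monoval_single i d r x : monoval (repeat 0%nat i ++ d :: repeat 0%nat r) x = x i ^ d.
Proof. revert x; induction i; intros x; simpl. rewrite monoval_zeros; ring.
  rewrite IHi. ring. Qed.

Lemma mdeg_zeros m : mdeg (repeat 0%nat m) = 0%nat.
Proof. induction m; auto. Qed.

Lemma mdeg_single i d r : mdeg (repeat 0%nat i ++ d :: repeat 0%nat r) = d.
Proof. induction i; cbn [repeat app]. rewrite mdeg_cons, mdeg_zeros; lia. rewrite mdeg_cons; lia. Qed.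

Lemma fold_max_ge l z : In z l -> (z <= fold_right Nat.max 0 l)%nat.
Proof. induction l; simpl; intros H; [tauto|]. destruct H as [<-|H]. lia. specialize (IHl H). lia. Qed.

Lemma pdeg_ge n D p a : supp n D p -> p a <> 0 -> (mdeg a <= pdeg n D p)%nat.
Proof.
  intros Hs Ha. unfold pdeg. apply fold_max_ge.
  replace (mdeg a) with (if Req_EM_T (p a) 0 then O else mdeg a).
  apply (in_map (fun a => if Req_EM_T (p a) 0 then O else mdeg a)). apply Hs; auto. destruct Req_EM_T; tauto.
Qed.

Lemma supp_deg n d f a : supp n d f -> f a <> 0 -> (mdeg a <= d)%nat.
Proof. intros Hs Ha. apply midxs_inv with n. apply Hs; auto. Qed.

Lemma phom_hom n D e p t y : (forall a, p a <> 0 -> (mdeg a <= e)%nat) ->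
  phom n D e p t (fun i => t * y i) = t ^ e * peval n D p y.
Proof.
  intros H. unfold phom, peval. rewrite <- sumR_map_scal. apply sumR_map_ext. intros a _.
  rewrite monoval_scale. destruct (Req_dec (p a) 0) as [E|E]. rewrite E; ring.
  specialize (H a E). replace e with ((e - mdeg a) + mdeg a)%nat at 2 by lia.
  rewrite pow_add. ring.
Qed.

Definition pert (f : mpoly) (a : midx) (c : R) : mpoly :=
  fun b => if meq b a then f b - c else f b.

Lemma supp_pert n d f a c : supp n d f -> In a (midxs n d) -> supp n d (pert f a c).
Proof. intros Hs Ha b Hb. unfold pert in Hb. destruct (meq b a) as [->|]; auto. Qed.

Lemma cdist_pert n d f a c : In a (midxs n d) -> cdist n d f (pert f a c) = Rabs c.
Proof.
  intros Ha. unfold cdist, pert.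
  rewrite (sumR_map_ext _ (fun b => if meq b a then Rabs c else 0)).
  rewrite sum_pert; auto. rewrite sumR_map_zero; auto. ring. apply midxs_nodup.
  intros b _. destruct meq. replace (f b - (f b - c)) with c by ring; auto.
  replace (f b - f b) with 0 by ring. apply Rabs_R0.
Qed.

Lemma peval_pert n d f a c x : In a (midxs n d) ->
  peval n d (pert f a c) x = peval n d f x - c * monoval a x.
Proof.
  intros Ha. unfold peval, pert.
  rewrite (sumR_map_ext _ (fun b => if meq b a then (f b - c) * monoval b x else f b * monoval b x)).
  rewrite sum_pert; auto. match goal with |- ?A + _ = ?B - _ => replace B with A by reflexivity end; ring. apply midxs_nodup.
  intros b _. destruct meq; auto.
Qed.

Lemma phom_pert n d e f a c x0 x : In a (midxs n d) ->
  phom n d e (pert f a c) x0 x = phom n d e f x0 x - c * x0 ^ (e - mdeg a) * monoval a x.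
Proof.
  intros Ha. unfold phom, pert.
  rewrite (sumR_map_ext _ (fun b => if meq b a then (f b - c) * x0 ^ (e - mdeg b) * monoval b x
       else f b * x0 ^ (e - mdeg b) * monoval b x)).
  rewrite sum_pert; auto. match goal with |- ?A + _ = ?B - _ => replace B with A by reflexivity end; ring. apply midxs_nodup.
  intros b _. destruct meq; auto.
Qed.

Definition Bmon n d (x : nat -> R) := sumR (map (fun a => Rabs (monoval a x)) (midxs n d)).

Lemma Bmon_nonneg n d x : 0 <= Bmon n d x.
Proof. apply sumR_map_nonneg. intros; apply Rabs_pos. Qed.

Lemma cdist_nonneg n d f h : 0 <= cdist n d f h.
Proof. apply sumR_map_nonneg. intros; apply Rabs_pos. Qed.

Lemma cdist_self n d f : cdist n d f f = 0.
Proof. apply sumR_map_zero. intros. replace (f a - f a) with 0 by ring. apply Rabs_R0. Qed.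

Lemma sumR_map_minus {A} (F G : A -> R) l :
  sumR (map F l) - sumR (map G l) = sumR (map (fun a => F a - G a) l).
Proof. induction l; simpl; [lra|]. rewrite <- IHl; lra. Qed.

Lemma sumR_map_scal_r {A} (c : R) (F : A -> R) l :
  sumR (map (fun a => F a * c) l) = sumR (map F l) * c.
Proof. induction l; simpl; [lra|]. rewrite IHl; lra. Qed.

Lemma peval_diff n d f h x :
  Rabs (peval n d f x - peval n d h x) <= cdist n d f h * Bmon n d x.
Proof.
  unfold peval, cdist. rewrite sumR_map_minus. rewrite <- sumR_map_scal_r.
  eapply Rle_trans. apply sumR_map_abs. apply sumR_map_le. intros a Ha.
  replace (f a * monoval a x - h a * monoval a x) with ((f a - h a) * monoval a x) by ring.
  rewrite Rabs_mult. apply Rmult_le_compat_l. apply Rabs_pos.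
  apply (sumR_map_elem (fun a => Rabs (monoval a x))); auto. intros; apply Rabs_pos.
Qed.

Lemma phom_diff n d e f h x0 x : Rabs x0 <= 1 -> (forall i, Rabs (x i) <= 1) ->
  Rabs (phom n d e f x0 x - phom n d e h x0 x) <= cdist n d f h.
Proof.
  intros H0 H. unfold phom, cdist. rewrite sumR_map_minus.
  eapply Rle_trans. apply sumR_map_abs. apply sumR_map_le. intros a _.
  replace (f a * x0 ^ (e - mdeg a) * monoval a x - h a * x0 ^ (e - mdeg a) * monoval a x)
    with ((f a - h a) * (x0 ^ (e - mdeg a) * monoval a x)) by ring.
  rewrite Rabs_mult. rewrite <- (Rmult_1_r (Rabs (f a - h a))) at 2.
  apply Rmult_le_compat_l. apply Rabs_pos. rewrite Rabs_mult.
  assert (A := pow_abs_le1 x0 (e - mdeg a) H0). assert (B := monoval_le1 a x H).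
  assert (0 <= Rabs (x0 ^ (e - mdeg a))) by apply Rabs_pos. assert (0 <= Rabs (monoval a x)) by apply Rabs_pos.
  nra.
Qed.

Lemma closure_P n d Dg g f : closureP n d (Pd n d Dg g) f -> forall x, VR n Dg g x -> 0 <= peval n d f x.
Proof.
  intros [Hs Hc] x Hx. apply Rnot_lt_le. intros Hneg.
  set (B := Bmon n d x). assert (HB : 0 <= B) by apply Bmon_nonneg.
  destruct (Hc (- peval n d f x / (B + 1))) as [h [Hh [[_ HP] Hd]]].
  { apply Rdiv_lt_0_compat; lra. }
  specialize (HP x Hx). assert (D := peval_diff n d f h x). fold B in D.
  assert (D2 := Rle_abs (- (peval n d f x - peval n d h x))). rewrite Rabs_Ropp in D2.
  assert (cdist n d f h * B <= - peval n d f x / (B + 1) * B).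
  { apply Rmult_le_compat_r; lra. }
  assert (- peval n d f x / (B + 1) * B < - peval n d f x).
  { replace (- peval n d f x / (B + 1) * B) with (- peval n d f x * (B / (B+1))) by (field; lra).
    assert (B / (B+1) < 1). { apply (Rmult_lt_reg_r (B+1)); [lra|]. unfold Rdiv. rewrite Rmult_assoc, Rinv_l; lra. }
    nra. }
  lra.
Qed.

Lemma Pd_closure n d Dg g f : Pd n d Dg g f -> closureP n d (Pd n d Dg g) f.
Proof. intros [Hs H]. split; auto. intros eps He. exists f. split; auto. split. split; auto.
  rewrite cdist_self; auto. Qed.

Lemma cont_peval' n D p : cont_n n (peval n D p).
Proof.
  unfold peval. apply (cont_sum n (fun a x => p a * monoval a x)).
  intros a Ha. apply cont_mult. apply cont_const. apply cont_monoval.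
  apply midxs_inv in Ha. lia.
Qed.

Lemma cont_Bmon n d : cont_n n (Bmon n d).
Proof.
  unfold Bmon. apply (cont_sum n (fun a x => Rabs (monoval a x))).
  intros a Ha. apply cont_abs. apply cont_monoval. apply midxs_inv in Ha. lia.
Qed.

Lemma zero_in n d : In (repeat 0%nat n) (midxs n d).
Proof. apply midxs_in. apply repeat_length. rewrite mdeg_zeros. lia. Qed.

Lemma part1 n Dg d g : (exists x, VR n Dg g x) -> compact_n n (VR n Dg g) ->
  forall f, supp n d f ->
   exists v, is_min (VR n Dg g) (peval n d f) v /\
     (0 < v <-> interiorP n d (Pd n d Dg g) f) /\
     (v = 0 <-> boundaryP n d (Pd n d Dg g) f).
Proof.
  intros Hne Hcp f Hf. assert (HC := compact_cover _ _ Hcp).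
  destruct (min_exists _ _ _ HC Hne (cont_peval' n d f)) as [v [[xm [Hxm Hv]] Hmin]].
  destruct (min_exists _ _ (fun x => - Bmon n d x) HC Hne (cont_opp _ _ (cont_Bmon n d))) as [w [_ Hw]].
  set (Bm := - w).
  assert (HBm : forall x, VR n Dg g x -> Bmon n d x <= Bm). { intros x Hx. specialize (Hw x Hx). unfold Bm; lra. }
  assert (HBm0 : 0 <= Bm). { specialize (HBm xm Hxm). pose proof (Bmon_nonneg n d xm). lra. }
  set (z := repeat 0%nat n).
  assert (Hint : 0 < v <-> interiorP n d (Pd n d Dg g) f).
  { split.
    - intros Hvp. split; auto. exists (v / (Bm + 1)). split. apply Rdiv_lt_0_compat; lra.
      intros h Hh Hd. split; auto. intros x Hx.
      assert (D := peval_diff n d f h x).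
      assert (D2 := Rle_abs (peval n d f x - peval n d h x)).
      specialize (HBm x Hx). specialize (Hmin x Hx). pose proof (Bmon_nonneg n d x). pose proof (cdist_nonneg n d f h).
      assert (cdist n d f h * Bmon n d x <= v / (Bm + 1) * Bm).
      { apply Rmult_le_compat; lra. }
      assert (v / (Bm + 1) * Bm < v).
      { replace (v / (Bm + 1) * Bm) with (v * (Bm / (Bm+1))) by (field; lra).
        assert (Bm / (Bm+1) < 1). { apply (Rmult_lt_reg_r (Bm+1)); [lra|]. unfold Rdiv. rewrite Rmult_assoc, Rinv_l; lra. }
        nra. }
      lra.
    - intros [_ [e [He H]]].
      assert (Hs1 : supp n d (pert f z (e/2))) by (apply supp_pert; auto; apply zero_in).
      assert (Hc1 : cdist n d f (pert f z (e/2)) < e) by (rewrite cdist_pert by apply zero_in; rewrite Rabs_right; lra).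
      destruct (H _ Hs1 Hc1) as [_ HP].
      specialize (HP xm Hxm). rewrite peval_pert in HP by apply zero_in.
        unfold z in HP. rewrite monoval_zeros in HP. lra. }
  exists v. split. split; auto. exists xm; auto. split; auto.
  split.
  - intros ->. split.
    + apply Pd_closure. split; auto.
    + intros Hi. apply Hint in Hi. lra.
  - intros [Hcl Hni]. assert (0 <= v). { rewrite <- Hv. apply (closure_P n d Dg g f Hcl); auto. }
    destruct (Rle_lt_or_eq_dec _ _ H) as [Hlt|Heq]; auto. exfalso. apply Hni, Hint; auto.
Qed.

Definition enc (p : R * (nat -> R)) : nat -> R := fun i => match i with O => fst p | S j => snd p j end.

Lemma cont_phom n D e p : cont_n (S n) (fun y => phom n D e p (y O) (shift y)).
Proof.
  unfold phom. apply (cont_sum (S n) (fun a y => p a * y O ^ (e - mdeg a) * monoval a (shift y))).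
  intros a Ha. apply cont_mult. apply cont_mult. apply cont_const. apply cont_pow, cont_coord; lia.
  apply (cont_shift n (monoval a)). apply cont_monoval. apply midxs_inv in Ha. lia.
Qed.

Lemma cont_sqnorm n : cont_n (S n) (fun y => sqnorm_h n (y O, shift y)).
Proof.
  unfold sqnorm_h. apply (cont_plus (S n) (fun y => y O ^ 2) (fun y => sumR (map (fun i => shift y i ^ 2) (seq 0 n)))).
  apply (cont_pow (S n) (fun y => y O)), cont_coord; lia.
  apply (cont_sum (S n) (fun i y => shift y i ^ 2)). intros i Hi. apply in_seq in Hi.
  apply cont_pow. unfold shift. apply (cont_coord (S n) (S i)). lia.
Qed.

Lemma cont_neq k F y c : cont_n k F -> F y <> c -> exists d, 0 < d /\ forall z, near_n k d y z -> F z <> c.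
Proof.
  intros HF Hne. destruct (HF y (Rabs (F y - c))) as [d [Hd H]].
  { apply Rabs_pos_lt. lra. }
  exists d; split; auto. intros z Hz Hc. specialize (H z Hz). rewrite Hc in H. lra.
Qed.

Lemma sq_le1 r : r ^ 2 <= 1 -> Rabs r <= 1.
Proof. intros H. unfold Rabs. destruct Rcase_abs; nra. Qed.

Lemma sqnorm_bound n p : inRn n (snd p) -> sqnorm_h n p = 1 ->
  Rabs (fst p) <= 1 /\ forall i, Rabs (snd p i) <= 1.
Proof.
  intros Hin Hs. unfold sqnorm_h in Hs.
  assert (H0 : 0 <= sumR (map (fun i => snd p i ^ 2) (seq 0 n))).
  { apply sumR_map_nonneg. intros. apply pow2_ge_0. }
  split. apply sq_le1. lra.
  intros i. destruct (lt_dec i n) as [Hi|Hi].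
  - apply sq_le1. assert (snd p i ^ 2 <= sumR (map (fun i => snd p i ^ 2) (seq 0 n))).
    { apply (sumR_map_elem (fun i => snd p i ^ 2)). intros; apply pow2_ge_0. apply in_seq. lia. }
    pose proof (pow2_ge_0 (fst p)). lra.
  - rewrite Hin by lia. rewrite Rabs_R0. lra.
Qed.

Lemma phom_dehom n D e p x0 x : 0 < x0 -> (forall a, p a <> 0 -> (mdeg a <= e)%nat) ->
  phom n D e p x0 x = x0 ^ e * peval n D p (fun i => x i / x0).
Proof.
  intros Hx0 H. rewrite <- phom_hom by auto. f_equal.
  apply functional_extensionality. intros i. field. lra.
Qed.

Lemma VRh_VR n Dg g p : Forall (supp n Dg) g -> VRh n Dg g p -> 0 < fst p ->
  VR n Dg g (fun i => snd p i / fst p).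
Proof.
  intros Hg [Hin Hf] Hp. split.
  - intros i Hi. rewrite Hin by auto. unfold Rdiv. ring.
  - rewrite Forall_forall in *. intros gi Hgi. specialize (Hf gi Hgi).
    rewrite phom_dehom in Hf; auto.
    + apply Rmult_integral in Hf. destruct Hf as [Hf|Hf]; auto.
      exfalso. apply (pow_nonzero (fst p) (pdeg n Dg gi)); auto. lra.
    + intros a Ha. apply pdeg_ge; auto.
Qed.

Lemma normalize n Dg g x : Forall (supp n Dg) g -> VR n Dg g x ->
  exists t, 0 < t /\ Sh n Dg g (t, fun i => t * x i).
Proof.
  intros Hg [Hin Hf].
  set (S2 := sumR (map (fun i => x i ^ 2) (seq 0 n))).
  assert (HS2 : 0 <= S2) by (apply sumR_map_nonneg; intros; apply pow2_ge_0).
  set (N := sqrt (1 + S2)).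
  assert (HN : 0 < N) by (apply sqrt_lt_R0; lra).
  assert (HN2 : N * N = 1 + S2) by (apply sqrt_sqrt; lra).
  exists (/ N). split. apply Rinv_0_lt_compat; auto.
  split; [split|split].
  - intros i Hi. simpl. rewrite Hin by auto. ring.
  - rewrite Forall_forall in *. intros gi Hgi. simpl. rewrite phom_hom.
    rewrite (Hf gi Hgi). ring. intros a Ha. apply pdeg_ge; auto.
  - unfold sqnorm_h. simpl.
    rewrite (sumR_map_ext _ (fun i => (/ N * / N) * x i ^ 2)) by (intros; ring).
    rewrite sumR_map_scal. fold S2. replace (/ N * (/ N * 1) + / N * / N * S2) with ((1 + S2) / (N * N)) by (field; lra). rewrite HN2. field. lra.
  - simpl. left. apply Rinv_0_lt_compat; auto.
Qed.

Lemma lemmaB n Dg d g h p : Forall (supp n Dg) g -> closed_at_inf n Dg g -> supp n d h ->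
  (forall x, VR n Dg g x -> 0 <= peval n d h x) ->
  VRh n Dg g p -> 0 <= fst p -> 0 <= phom n d d h (fst p) (snd p).
Proof.
  intros Hg Hci Hh HP Hp Hp0. apply Rnot_lt_le. intros Hneg.
  destruct (Hci p) as [Hc _]. destruct (Hc (conj Hp Hp0)) as [_ Hcl].
  destruct (cont_phom n d d h (enc p) (- phom n d d h (fst p) (snd p))) as [del [Hdel Hcont]]. lra.
  destruct (Hcl del Hdel) as [q [[Hq Hq0] [Hd1 Hd2]]].
  assert (Hnear : near_n (S n) del (enc p) (enc q)).
  { intros i Hi. destruct i; simpl. auto. apply Hd2. lia. }
  specialize (Hcont _ Hnear). simpl in Hcont.
  change (shift (enc p)) with (fun i => snd p i) in Hcont.
  change (shift (enc q)) with (fun i => snd q i) in Hcont.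
  assert (Hy := VRh_VR n Dg g q Hg Hq Hq0). specialize (HP _ Hy).
  rewrite (phom_dehom n d d h (fst q) (fun i => snd q i)) in Hcont; auto.
  2: intros a Ha; apply (supp_deg n d h a Hh Ha).
  assert (0 <= fst q ^ d) by (apply pow_le; lra).
  assert (0 <= fst q ^ d * peval n d h (fun i => snd q i / fst q)) by (apply Rmult_le_pos; auto).
  apply Rabs_def2 in Hcont. change (fun i : nat => snd p i) with (snd p) in Hcont. lra.
Qed.

Lemma Kp_closed n Dg g : forall y, inRn (S n) y -> ~ Sh n Dg g (y O, shift y) ->
  exists d, 0 < d /\ forall z, near_n (S n) d y z -> ~ Sh n Dg g (z O, shift z).
Proof.
  intros y Hy Hn.
  assert (Hin : forall z, inRn (S n) z -> inRn n (shift z)).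
  { intros z Hz i Hi. apply Hz. lia. }
  destruct (classic (Forall (fun gi => phom n Dg (pdeg n Dg gi) gi (y O) (shift y) = 0) g)) as [HF|HF].
  - destruct (Req_dec (sqnorm_h n (y O, shift y)) 1) as [HS|HS].
    + assert (Hy0 : y O < 0).
      { apply Rnot_le_lt. intros H0. apply Hn. split; [split|split]; simpl; auto. }
      exists (- y O). split. lra. intros z Hz [_ [_ H0]]. specialize (Hz O ltac:(lia)). simpl in H0.
      apply Rabs_def2 in Hz. lra.
    + destruct (cont_neq _ _ y 1 (cont_sqnorm n) HS) as [d [Hd H]].
      exists d; split; auto. intros z Hz [_ [H1 _]]. apply (H z Hz H1).
  - rewrite Forall_forall in HF. apply Classical_Pred_Type.not_all_ex_not in HF.
    destruct HF as [gi Hgi]. apply imply_to_and in Hgi. destruct Hgi as [Hgi Hne].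
    destruct (cont_neq _ _ y 0 (cont_phom n Dg (pdeg n Dg gi) gi) Hne) as [d [Hd H]].
    exists d; split; auto. intros z Hz [[_ HF] _]. rewrite Forall_forall in HF.
    apply (H z Hz). apply (HF gi Hgi).
Qed.

Lemma abs_le1 r : Rabs r <= 1 -> -1 <= r <= 1.
Proof. unfold Rabs; destruct Rcase_abs; lra. Qed.

Lemma single_in n d i : (i < n)%nat ->
  In (repeat 0%nat i ++ d :: repeat 0%nat (n - 1 - i)) (midxs n d).
Proof. intros Hi. apply midxs_in. rewrite length_app, !repeat_length. simpl. rewrite repeat_length. lia.
  rewrite mdeg_single. lia. Qed.

Lemma part2 n Dg d g : Forall (supp n Dg) g -> (exists x, VR n Dg g x) ->
  closed_at_inf n Dg g ->
  forall f, supp n d f ->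
   exists v, is_min (Sh n Dg g) (fun p => phom n d d f (fst p) (snd p)) v /\
     (0 < v <-> interiorP n d (Pd n d Dg g) f) /\
     (v = 0 <-> boundaryP n d (Pd n d Dg g) f).
Proof.
  intros Hg [x1 Hx1] Hci f Hf.
  set (K := fun y => Sh n Dg g (y O, shift y)).
  assert (HC : CoverProp (S n) K).
  { apply closed_box_cover.
    - intros y [[Hin _] [Hs Hy0]]. split.
      + intros i Hi. destruct i. lia. apply Hin. lia.
      + destruct (sqnorm_bound n (y O, shift y) Hin Hs) as [B1 B2]. simpl in B1, B2.
        intros i Hi. destruct i. apply abs_le1; auto.
        apply abs_le1, B2.
    - apply Kp_closed. }
  assert (Hne : exists y, K y).
  { destruct (normalize n Dg g x1 Hg Hx1) as [t [Ht HS]]. exists (enc (t, fun i => t * x1 i)). exact HS. }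
  destruct (min_exists _ _ _ HC Hne (cont_phom n d d f)) as [v [[ym [Hym Hv]] Hmin]].
  set (x0m := ym O). set (xm := shift ym). fold x0m xm in Hv.
  assert (Hym' : Sh n Dg g (x0m, xm)) by exact Hym.
  assert (HminS : forall p, Sh n Dg g p -> v <= phom n d d f (fst p) (snd p)).
  { intros [p0 px] Hp. apply (Hmin (enc (p0, px))). exact Hp. }
  clearbody x0m xm. clear Hym Hmin.
  destruct Hym' as [HVm [HSm H0m]]. simpl in HVm, HSm, H0m.
  assert (Hfd : forall a, f a <> 0 -> (mdeg a <= d)%nat) by (intros; eapply supp_deg; eauto).
  assert (Hpos : forall h, supp n d h -> (forall p, Sh n Dg g p -> 0 <= phom n d d h (fst p) (snd p)) ->
                   forall x, VR n Dg g x -> 0 <= peval n d h x).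
  { intros h Hh H x Hx. destruct (normalize n Dg g x Hg Hx) as [t [Ht HS]].
    specialize (H _ HS). simpl in H. rewrite phom_hom in H by (intros; eapply supp_deg; eauto).
    assert (0 < t ^ d) by (apply pow_lt; auto). nra. }
  assert (Hint : 0 < v <-> interiorP n d (Pd n d Dg g) f).
  { split.
    - intros Hvp. split; auto. exists v. split; auto. intros h Hh Hd. split; auto.
      intros x Hx. destruct (normalize n Dg g x Hg Hx) as [t [Ht HS]].
      assert (Hfp := HminS _ HS). simpl in Hfp.
      destruct HS as [[Hin _] [Hs _]].
      destruct (sqnorm_bound n _ Hin Hs) as [B1 B2]. simpl in B1, B2.
      assert (D := phom_diff n d d f h t (fun i => t * x i) B1 B2).
      assert (D2 := Rle_abs (phom n d d f t (fun i => t * x i) - phom n d d h t (fun i => t * x i))).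
      assert (Hhd : forall a, h a <> 0 -> (mdeg a <= d)%nat) by (intros; eapply supp_deg; [exact Hh|auto]).
      rewrite (phom_hom n d d f) in D, D2, Hfp by exact Hfd.
      rewrite (phom_hom n d d h) in D, D2 by exact Hhd.
      assert (0 < t ^ d) by (apply pow_lt; auto).
      assert (0 < t ^ d * peval n d h x) by lra.
      apply Rlt_le. apply (Rmult_lt_reg_l (t ^ d)); auto. lra.
    - intros [_ [e [He H]]].
      destruct (Rle_lt_or_eq_dec _ _ H0m) as [Hx0|Hx0].
      + set (z := repeat 0%nat n).
        assert (Hs1 : supp n d (pert f z (e/2))) by (apply supp_pert; auto; apply zero_in).
        assert (Hc1 : cdist n d f (pert f z (e/2)) < e) by (rewrite cdist_pert by apply zero_in; rewrite Rabs_right; lra).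
        destruct (H _ Hs1 Hc1) as [_ HP].
        assert (Hy := VRh_VR n Dg g (x0m, xm) Hg HVm Hx0). simpl in Hy.
        specialize (HP _ Hy). rewrite peval_pert in HP by apply zero_in.
        unfold z in HP. rewrite monoval_zeros in HP.
        rewrite phom_dehom in Hv by auto.
        assert (0 < x0m ^ d) by (apply pow_lt; auto).
        rewrite <- Hv. apply Rmult_lt_0_compat; auto. lra.
      + subst x0m. unfold sqnorm_h in HSm. cbn [fst snd] in HSm.
        assert (Hi : exists i, (i < n)%nat /\ xm i <> 0).
        { apply NNPP. intros Hno. assert (sumR (map (fun i => xm i ^ 2) (seq 0 n)) = 0).
          { apply sumR_map_zero. intros i Hi. apply in_seq in Hi.
            destruct (Req_dec (xm i) 0) as [E|E]. rewrite E; ring. exfalso. apply Hno. exists i; split; auto. lia. }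
          lra. }
        destruct Hi as [i [Hi Hxi]].
        set (a := repeat 0%nat i ++ d :: repeat 0%nat (n - 1 - i)).
        assert (Ha : In a (midxs n d)) by (apply single_in; auto).
        set (c := xm i ^ d).
        assert (Hc : c <> 0) by (apply pow_nonzero; auto).
        set (t := e / (2 * (Rabs c + 1))).
        assert (Hca : 0 <= Rabs c) by apply Rabs_pos.
        assert (Ht : 0 < t) by (apply Rdiv_lt_0_compat; lra).
        assert (Hs1 : supp n d (pert f a (t * c))) by (apply supp_pert; auto).
        assert (Hc1 : cdist n d f (pert f a (t * c)) < e).
        { rewrite cdist_pert by auto. rewrite Rabs_mult, Rabs_right by lra.
          unfold t. replace (e / (2 * (Rabs c + 1)) * Rabs c) with (e * (Rabs c / (2 * (Rabs c + 1)))) by (field; lra).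
          assert (Rabs c / (2 * (Rabs c + 1)) < 1).
          { apply (Rmult_lt_reg_r (2 * (Rabs c + 1))); [lra|]. unfold Rdiv. rewrite Rmult_assoc, Rinv_l; lra. }
          nra. }
        destruct (H _ Hs1 Hc1) as [_ HP].
        assert (HB := lemmaB n Dg d g _ (0, xm) Hg Hci Hs1 HP HVm (Rle_refl 0)).
        simpl in HB. rewrite phom_pert in HB by auto.
        unfold a in HB. rewrite mdeg_single, monoval_single in HB.
        replace (d - d)%nat with 0%nat in HB by lia. fold c in HB. simpl in HB.
        assert (0 < c * c) by (apply Rsqr_pos_lt; auto).
        assert (0 < t * (c * c)) by (apply Rmult_lt_0_compat; auto).
        rewrite <- Hv. nra. }
  exists v. split. split; [exists (x0m, xm); simpl; split; auto; split; auto|auto].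
  split; auto. split.
  - intros Hv0. split.
    + apply Pd_closure. split; auto. apply Hpos; auto. intros p Hp. rewrite <- Hv0. auto.
    + intros Hi. apply Hint in Hi. lra.
  - intros [Hcl Hni].
    assert (0 <= v).
    { rewrite <- Hv. apply (lemmaB n Dg d g f (x0m, xm)); auto. apply (closure_P n d Dg g f Hcl). }
    destruct (Rle_lt_or_eq_dec _ _ H) as [Hlt|Heq]; auto. exfalso. apply Hni, Hint; auto.
Qed.

Theorem mainTheorem9 (n Dg d : nat) (g : list mpoly) :
  Forall (supp n Dg) g ->
  (exists x, VR n Dg g x) ->
  (1 <= d)%nat ->
  (compact_n n (VR n Dg g) ->
   forall f : mpoly, supp n d f ->
   exists v, is_min (VR n Dg g) (peval n d f) v /\
     (0 < v <-> interiorP n d (Pd n d Dg g) f) /\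
     (v = 0 <-> boundaryP n d (Pd n d Dg g) f)) /\
  (closed_at_inf n Dg g ->
   forall f : mpoly, supp n d f ->
   exists v, is_min (Sh n Dg g) (fun p => phom n d d f (fst p) (snd p)) v /\
     (0 < v <-> interiorP n d (Pd n d Dg g) f) /\
     (v = 0 <-> boundaryP n d (Pd n d Dg g) f)).
Proof.
  intros Hg Hne Hd. split.
  - intros Hc. apply part1; auto.
  - intros Hci. apply part2; auto.
Qed.
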